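(* (a) Let QHC$^-$ be the calculus with the same language as QHC whose deductive system consists only of classical predicate logic applied to all propositions, intuitionistic predicate logic applied to all problems, the rules $p\,/\,!p$ and $\alpha\,/\,?\alpha$, and the schemas $?!p\to p$, $\alpha\to\, !?\alpha$, $!(p\to q)\to(!p\to !q)$, $?(\alpha\to\beta)\to(?\alpha\to ?\beta)$, $!0\to\bot$. Then the following schemas are derivable in QHC$^-$: $?(\alpha\land\beta)\leftrightarrow ?\alpha\land ?\beta$; $?(\alpha\lor\beta)\leftrightarrow ?\alpha\lor ?\beta$; $?\bot\to 0$; $?\exists x\,\alpha(x)\leftrightarrow\exists x\,?\alpha(x)$; $?\forall x\,\alpha(x)\to\forall x\,?\alpha(x)$. (Hence QHC and QHC$^-$ have the same derivable rules.) (b) In QHC: $!p\land !q\Leftrightarrow\, !(p\land q)$; $!p\lor !q\Rightarrow\, !(p\lor q)$; $\forall x\,!p(x)\Leftrightarrow\, !\forall x\,p(x)$; $\exists x\,!p(x)\Rightarrow\, !\exists x\,p(x)$.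
   Context: QHC is a two-sorted first-order calculus. Its only terms are individual variables. Every formula is either a problem (denoted by Greek letters $\alpha,\beta,\gamma,\dots$) or a proposition (denoted by Latin letters $p,q,\dots$). Atomic formulas are proposition variables $p(t_1,\dots,t_n)$ (of proposition type), problem variables $\pi(t_1,\dots,t_n)$ (of problem type), and the constants $0$ (a proposition, classical falsity) and $\bot$ (a problem, intuitionistic absurdity). Propositions are closed under the classical connectives $\land,\lor,\to$ and quantifiers $\exists,\forall$; problems are closed under the intuitionistic connectives $\land,\lor,\to$ and quantifiers $\exists,\forall$ (the same symbols are used, distinguished by the type of the arguments). $\neg p$ abbreviates $p\to 0$, $\neg\alpha$ abbreviates $\alpha\to\bot$, and $\leftrightarrow$ is defined as usual. There are two type-conversion operators: if $p$ is a proposition then $!p$ is a problem, and if $\alpha$ is a problem then $?\alpha$ is a proposition. Deductive system of QHC: all axioms and rules of classical predicate logic applied to all propositions; all postulates and rules of intuitionistic predicate logic applied to all problems; the rules $p\,/\,!p$ and $\alpha\,/\,?\alpha$; and the schemas $?!p\to p$; $\alpha\to\, !?\alpha$; $!(p\to q)\to(!p\to !q)$; $?(\alpha\to\beta)\to(?\alpha\to ?\beta)$; $!0\to\bot$; $?(\alpha\land\beta)\leftrightarrow ?\alpha\land ?\beta$; $?(\alpha\lor\beta)\leftrightarrow ?\alpha\lor ?\beta$; $?\bot\to 0$; $?\exists x\,\alpha(x)\leftrightarrow\exists x\,?\alpha(x)$; $?\forall x\,\alpha(x)\to\forall x\,?\alpha(x)$ (usual variable side conditions implicit). $\vdash A$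 means $A$ is derivable in QHC; $A\Rightarrow B$ means $\vdash A\to B$ and $A\Leftrightarrow B$ means $\vdash A\leftrightarrow B$ (with $A,B$ of the same type); $A\vdash B$ means $B$ is derivable in QHC from the premise $A$. Notation: $\Box p := ?!p$ (a proposition) and $\nabla\alpha := !?\alpha$ (a problem). QC and QH denote classical and intuitionistic predicate calculus. *)

(* Defs.v *)
From Stdlib Require Import Bool List Arith.
Import ListNotations.

(* Individual variables are natural numbers; the only terms are variables. *)
Definition ivar := nat.

(* Propositions (classical sort) and problems (intuitionistic sort). *)
Inductive prop : Type :=
| PVar  : nat -> list ivar -> prop
| PFalse : prop
| PAnd  : prop -> prop -> prop
| POr   : prop -> prop -> prop
| PImp  : prop -> prop -> prop
| PEx   : ivar -> prop -> prop
| PAll  : ivar -> prop -> prop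
| PQ    : prob -> prop                     (* ?alpha *)
with prob : Type :=
| AVar  : nat -> list ivar -> prob
| ABot  : prob
| AAnd  : prob -> prob -> prob
| AOr   : prob -> prob -> prob
| AImp  : prob -> prob -> prob
| AEx   : ivar -> prob -> prob
| AAll  : ivar -> prob -> prob
| AB    : prop -> prob.                    (* !p *)

Definition PNeg (p : prop) : prop := PImp p PFalse.
Definition ANeg (a : prob) : prob := AImp a ABot.
Definition PIff (p q : prop) : prop := PAnd (PImp p q) (PImp q p).
Definition AIff (a b : prob) : prob := AAnd (AImp a b) (AImp b a).

Fixpoint freeP (x : ivar) (p : prop) : bool :=
  match p with
  | PVar _ ts => existsb (Nat.eqb x) ts
  | PFalse => false
  | PAnd p1 p2 | POr p1 p2 | PImp p1 p2 => freeP x p1 || freeP x p2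
  | PEx z p1 | PAll z p1 => negb (Nat.eqb x z) && freeP x p1
  | PQ a => freeA x a
  end
with freeA (x : ivar) (a : prob) : bool :=
  match a with
  | AVar _ ts => existsb (Nat.eqb x) ts
  | ABot => false
  | AAnd a1 a2 | AOr a1 a2 | AImp a1 a2 => freeA x a1 || freeA x a2
  | AEx z a1 | AAll z a1 => negb (Nat.eqb x z) && freeA x a1
  | AB p => freeP x p
  end.

Definition substV (x y : ivar) (t : ivar) : ivar := if Nat.eqb t x then y else t.

(* Replace the free occurrences of x by y (no renaming; used only under the
   side condition "y is free for x"). *)
Fixpoint substP (x y : ivar) (p : prop) : prop :=
  match p with
  | PVar i ts => PVar i (map (substV x y) ts)
  | PFalse => PFalse
  | PAnd p1 p2 => PAnd (substP x y p1) (substP x y p2)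
  | POr p1 p2 => POr (substP x y p1) (substP x y p2)
  | PImp p1 p2 => PImp (substP x y p1) (substP x y p2)
  | PEx z p1 => if Nat.eqb z x then PEx z p1 else PEx z (substP x y p1)
  | PAll z p1 => if Nat.eqb z x then PAll z p1 else PAll z (substP x y p1)
  | PQ a => PQ (substA x y a)
  end
with substA (x y : ivar) (a : prob) : prob :=
  match a with
  | AVar i ts => AVar i (map (substV x y) ts)
  | ABot => ABot
  | AAnd a1 a2 => AAnd (substA x y a1) (substA x y a2)
  | AOr a1 a2 => AOr (substA x y a1) (substA x y a2)
  | AImp a1 a2 => AImp (substA x y a1) (substA x y a2)
  | AEx z a1 => if Nat.eqb z x then AEx z a1 else AEx z (substA x y a1)
  | AAll z a1 => if Nat.eqb z x then AAll z a1 else AAll z (substA x y a1)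
  | AB p => AB (substP x y p)
  end.

Fixpoint free_forP (y x : ivar) (p : prop) : bool :=
  match p with
  | PVar _ _ | PFalse => true
  | PAnd p1 p2 | POr p1 p2 | PImp p1 p2 => free_forP y x p1 && free_forP y x p2
  | PEx z p1 | PAll z p1 =>
      negb (freeP x p) || (negb (Nat.eqb z y) && free_forP y x p1)
  | PQ a => free_forA y x a
  end
with free_forA (y x : ivar) (a : prob) : bool :=
  match a with
  | AVar _ _ | ABot => true
  | AAnd a1 a2 | AOr a1 a2 | AImp a1 a2 => free_forA y x a1 && free_forA y x a2
  | AEx z a1 | AAll z a1 =>
      negb (freeA x a) || (negb (Nat.eqb z y) && free_forA y x a1)
  | AB p => free_forP y x p
  end.

(* Derivability.  [full = true]: QHC;  [full = false]: QHC^- .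
   [HP], [HA]: premises (additional non-logical axioms) of each sort.
   Classical / intuitionistic predicate logic is given by Kleene's Hilbert system
   (intuitionistic part + double negation elimination for propositions). *)
Inductive DP (full : bool) (HP : prop -> Prop) (HA : prob -> Prop) : prop -> Prop :=
| P_hyp   : forall p, HP p -> DP full HP HA p
| P_K     : forall p q, DP full HP HA (PImp p (PImp q p))
| P_S     : forall p q r,
    DP full HP HA (PImp (PImp p (PImp q r)) (PImp (PImp p q) (PImp p r)))
| P_AndE1 : forall p q, DP full HP HA (PImp (PAnd p q) p)
| P_AndE2 : forall p q, DP full HP HA (PImp (PAnd p q) q)
| P_AndI  : forall p q, DP full HP HA (PImp p (PImp q (PAnd p q)))
| P_OrI1  : forall p q, DP full HP HA (PImp p (POr p q))
| P_OrI2  : forall p q, DP full HP HA (PImp q (POr p q))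
| P_OrE   : forall p q r,
    DP full HP HA (PImp (PImp p r) (PImp (PImp q r) (PImp (POr p q) r)))
| P_EFQ   : forall p, DP full HP HA (PImp PFalse p)
| P_DNE   : forall p, DP full HP HA (PImp (PNeg (PNeg p)) p)
| P_AllE  : forall x y p, free_forP y x p = true ->
    DP full HP HA (PImp (PAll x p) (substP x y p))
| P_ExI   : forall x y p, free_forP y x p = true ->
    DP full HP HA (PImp (substP x y p) (PEx x p))
| P_MP    : forall p q, DP full HP HA (PImp p q) -> DP full HP HA p -> DP full HP HA q
| P_AllI  : forall x p q, freeP x q = false ->
    DP full HP HA (PImp q p) -> DP full HP HA (PImp q (PAll x p))
| P_ExE   : forall x p q, freeP x q = false ->
    DP full HP HA (PImp p q) -> DP full HP HA (PImp (PEx x p) q)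
| P_Q     : forall a, DA full HP HA a -> DP full HP HA (PQ a)
| P_QB    : forall p, DP full HP HA (PImp (PQ (AB p)) p)
| P_QK    : forall a b,
    DP full HP HA (PImp (PQ (AImp a b)) (PImp (PQ a) (PQ b)))
| P_QAnd  : forall a b, full = true ->
    DP full HP HA (PIff (PQ (AAnd a b)) (PAnd (PQ a) (PQ b)))
| P_QOr   : forall a b, full = true ->
    DP full HP HA (PIff (PQ (AOr a b)) (POr (PQ a) (PQ b)))
| P_QBot  : full = true -> DP full HP HA (PImp (PQ ABot) PFalse)
| P_QEx   : forall x a, full = true ->
    DP full HP HA (PIff (PQ (AEx x a)) (PEx x (PQ a)))
| P_QAll  : forall x a, full = true ->
    DP full HP HA (PImp (PQ (AAll x a)) (PAll x (PQ a)))
with DA (full : bool) (HP : prop -> Prop) (HA : prob -> Prop) : prob -> Prop :=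
| A_hyp   : forall a, HA a -> DA full HP HA a
| A_K     : forall a b, DA full HP HA (AImp a (AImp b a))
| A_S     : forall a b c,
    DA full HP HA (AImp (AImp a (AImp b c)) (AImp (AImp a b) (AImp a c)))
| A_AndE1 : forall a b, DA full HP HA (AImp (AAnd a b) a)
| A_AndE2 : forall a b, DA full HP HA (AImp (AAnd a b) b)
| A_AndI  : forall a b, DA full HP HA (AImp a (AImp b (AAnd a b)))
| A_OrI1  : forall a b, DA full HP HA (AImp a (AOr a b))
| A_OrI2  : forall a b, DA full HP HA (AImp b (AOr a b))
| A_OrE   : forall a b c,
    DA full HP HA (AImp (AImp a c) (AImp (AImp b c) (AImp (AOr a b) c)))
| A_EFQ   : forall a, DA full HP HA (AImp ABot a)
| A_AllE  : forall x y a, free_forA y x a = true ->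
    DA full HP HA (AImp (AAll x a) (substA x y a))
| A_ExI   : forall x y a, free_forA y x a = true ->
    DA full HP HA (AImp (substA x y a) (AEx x a))
| A_MP    : forall a b, DA full HP HA (AImp a b) -> DA full HP HA a -> DA full HP HA b
| A_AllI  : forall x a b, freeA x b = false ->
    DA full HP HA (AImp b a) -> DA full HP HA (AImp b (AAll x a))
| A_ExE   : forall x a b, freeA x b = false ->
    DA full HP HA (AImp a b) -> DA full HP HA (AImp (AEx x a) b)
| A_B     : forall p, DP full HP HA p -> DA full HP HA (AB p)
| A_BQ    : forall a, DA full HP HA (AImp a (AB (PQ a)))
| A_BK    : forall p q,
    DA full HP HA (AImp (AB (PImp p q)) (AImp (AB p) (AB q)))
| A_B0    : DA full HP HA (AImp (AB PFalse) ABot).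

Definition noP : prop -> Prop := fun _ => False.
Definition noA : prob -> Prop := fun _ => False.

Definition QHC_P (p : prop) : Prop := DP true noP noA p.
Definition QHC_A (a : prob) : Prop := DA true noP noA a.
Definition QHCm_P (p : prop) : Prop := DP false noP noA p.
Definition QHCm_A (a : prob) : Prop := DA false noP noA a.

(* Main.v *)
Require Import Defs.
From Stdlib Require Import Bool List Arith.

Scheme DP_mut := Induction for DP Sort Prop
with DA_mut := Induction for DA Sort Prop.
Scheme prop_mut := Induction for prop Sort Prop
with prob_mut := Induction for prob Sort Prop.

Lemma substV_id x t : substV x x t = t.
Proof. unfold substV; destruct (Nat.eqb_spec t x); subst; auto. Qed.

Lemma map_substV_id x l : map (substV x x) l = l.
Proof. induction l; simpl; rewrite ?substV_id, ?IHl; auto. Qed.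

Lemma subst_id x :
  (forall p, substP x x p = p) /\ (forall a, substA x x a = a).
Proof.
  split; [apply (prop_mut (fun p => substP x x p = p) (fun a => substA x x a = a))
         |apply (prob_mut (fun p => substP x x p = p) (fun a => substA x x a = a))];
  intros; simpl; rewrite ?map_substV_id; try congruence;
  try (destruct (Nat.eqb i x); congruence).
Qed.

Lemma free_for_id x :
  (forall p, free_forP x x p = true) /\ (forall a, free_forA x x a = true).
Proof.
  split; [apply (prop_mut (fun p => free_forP x x p = true) (fun a => free_forA x x a = true))
         |apply (prob_mut (fun p => free_forP x x p = true) (fun a => free_forA x x a = true))];
  intros; simpl; rewrite ?H, ?H0; auto;
  rewrite (Nat.eqb_sym i x); destruct (Nat.eqb x i); simpl; auto; apply orb_true_r.
Qed.


Lemma PI f HP HA p : DP f HP HA (PImp p p).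
Proof. eapply P_MP; [eapply P_MP; [apply (P_S _ _ _ p (PImp p p) p)|apply P_K]|apply (P_K _ _ _ p p)]. Qed.
Lemma AI f HP HA p : DA f HP HA (AImp p p).
Proof. eapply A_MP; [eapply A_MP; [apply (A_S _ _ _ p (AImp p p) p)|apply A_K]|apply (A_K _ _ _ p p)]. Qed.

Lemma PSr f HP HA p q r : DP f HP HA (PImp p (PImp q r)) -> DP f HP HA (PImp p q) -> DP f HP HA (PImp p r).
Proof. intros; eapply P_MP; [eapply P_MP; [apply P_S|eauto]|eauto]. Qed.
Lemma ASr f HP HA p q r : DA f HP HA (AImp p (AImp q r)) -> DA f HP HA (AImp p q) -> DA f HP HA (AImp p r).
Proof. intros; eapply A_MP; [eapply A_MP; [apply A_S|eauto]|eauto]. Qed.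
Lemma PKr f HP HA p q : DP f HP HA q -> DP f HP HA (PImp p q).
Proof. intros; eapply P_MP; [apply P_K|eauto]. Qed.
Lemma AKr f HP HA p q : DA f HP HA q -> DA f HP HA (AImp p q).
Proof. intros; eapply A_MP; [apply A_K|eauto]. Qed.
Lemma Ptr f HP HA p q r : DP f HP HA (PImp p q) -> DP f HP HA (PImp q r) -> DP f HP HA (PImp p r).
Proof. intros; eapply PSr; [apply PKr|]; eauto. Qed.
Lemma Atr f HP HA p q r : DA f HP HA (AImp p q) -> DA f HP HA (AImp q r) -> DA f HP HA (AImp p r).
Proof. intros; eapply ASr; [apply AKr|]; eauto. Qed.
Lemma PconjI f HP HA p q r : DP f HP HA (PImp p q) -> DP f HP HA (PImp p r) -> DP f HP HA (PImp p (PAnd q r)).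
Proof. intros H1 H2; eapply PSr; [eapply Ptr; [exact H1|apply P_AndI]|exact H2]. Qed.
Lemma AconjI f HP HA p q r : DA f HP HA (AImp p q) -> DA f HP HA (AImp p r) -> DA f HP HA (AImp p (AAnd q r)).
Proof. intros H1 H2; eapply ASr; [eapply Atr; [exact H1|apply A_AndI]|exact H2]. Qed.
Lemma Puncurry f HP HA p q r : DP f HP HA (PImp p (PImp q r)) -> DP f HP HA (PImp (PAnd p q) r).
Proof. intros; eapply PSr; [eapply Ptr; [apply P_AndE1|eauto]|apply P_AndE2]. Qed.
Lemma Auncurry f HP HA p q r : DA f HP HA (AImp p (AImp q r)) -> DA f HP HA (AImp (AAnd p q) r).
Proof. intros; eapply ASr; [eapply Atr; [apply A_AndE1|eauto]|apply A_AndE2]. Qed.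
Lemma PorE' f HP HA p q r : DP f HP HA (PImp p r) -> DP f HP HA (PImp q r) -> DP f HP HA (PImp (POr p q) r).
Proof. intros; eapply P_MP; [eapply P_MP; [apply P_OrE|eauto]|eauto]. Qed.
Lemma AorE' f HP HA p q r : DA f HP HA (AImp p r) -> DA f HP HA (AImp q r) -> DA f HP HA (AImp (AOr p q) r).
Proof. intros; eapply A_MP; [eapply A_MP; [apply A_OrE|eauto]|eauto]. Qed.
Lemma PiffI f HP HA p q : DP f HP HA (PImp p q) -> DP f HP HA (PImp q p) -> DP f HP HA (PIff p q).
Proof. intros; eapply P_MP; [eapply P_MP; [apply P_AndI|eauto]|eauto]. Qed.
Lemma AiffI f HP HA p q : DA f HP HA (AImp p q) -> DA f HP HA (AImp q p) -> DA f HP HA (AIff p q).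
Proof. intros; eapply A_MP; [eapply A_MP; [apply A_AndI|eauto]|eauto]. Qed.

Lemma Qmono f HP HA a b : DA f HP HA (AImp a b) -> DP f HP HA (PImp (PQ a) (PQ b)).
Proof. intros; eapply P_MP; [apply P_QK|apply P_Q; auto]. Qed.
Lemma Qmono2 f HP HA a b c : DA f HP HA (AImp a (AImp b c)) -> DP f HP HA (PImp (PQ a) (PImp (PQ b) (PQ c))).
Proof. intros; eapply Ptr; [apply Qmono; eauto|apply P_QK]. Qed.
Lemma Bmono f HP HA p q : DP f HP HA (PImp p q) -> DA f HP HA (AImp (AB p) (AB q)).
Proof. intros; eapply A_MP; [apply A_BK|apply A_B; auto]. Qed.
Lemma Bmono2 f HP HA p q r : DP f HP HA (PImp p (PImp q r)) -> DA f HP HA (AImp (AB p) (AImp (AB q) (AB r))).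
Proof. intros; eapply Atr; [apply Bmono; eauto|apply A_BK]. Qed.
Lemma Qkey f HP HA a p : DA f HP HA (AImp a (AB p)) -> DP f HP HA (PImp (PQ a) p).
Proof. intros; eapply Ptr; [apply Qmono; eauto|apply P_QB]. Qed.

Lemma d_QAnd f HP HA a b : DP f HP HA (PIff (PQ (AAnd a b)) (PAnd (PQ a) (PQ b))).
Proof.
  apply PiffI.
  - apply PconjI; apply Qmono; [apply A_AndE1|apply A_AndE2].
  - apply Puncurry, Qmono2, A_AndI.
Qed.
Lemma d_QOr f HP HA a b : DP f HP HA (PIff (PQ (AOr a b)) (POr (PQ a) (PQ b))).
Proof.
  apply PiffI.
  - apply Qkey, AorE'; (eapply Atr; [apply A_BQ|apply Bmono]); [apply P_OrI1|apply P_OrI2].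
  - apply PorE'; apply Qmono; [apply A_OrI1|apply A_OrI2].
Qed.
Lemma d_QBot f HP HA : DP f HP HA (PImp (PQ ABot) PFalse).
Proof. apply Qkey, A_EFQ. Qed.

Lemma freeQ x a : freeP x (PEx x (PQ a)) = false.
Proof. simpl; rewrite Nat.eqb_refl; auto. Qed.

Lemma d_QEx f HP HA x a : DP f HP HA (PIff (PQ (AEx x a)) (PEx x (PQ a))).
Proof.
  destruct (subst_id x) as [sp sa]; destruct (free_for_id x) as [fp fa].
  apply PiffI.
  - apply Qkey, A_ExE; [simpl; rewrite Nat.eqb_refl; auto|].
    eapply Atr; [apply A_BQ|apply Bmono].
    pose proof (P_ExI f HP HA x x (PQ a)) as H. simpl in H. rewrite sa, fa in H. auto.
  - apply P_ExE; [simpl; rewrite Nat.eqb_refl; auto|]. apply Qmono.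
    pose proof (A_ExI f HP HA x x a) as H. rewrite sa, fa in H. auto.
Qed.
Lemma d_QAll f HP HA x a : DP f HP HA (PImp (PQ (AAll x a)) (PAll x (PQ a))).
Proof.
  destruct (subst_id x) as [sp sa]; destruct (free_for_id x) as [fp fa].
  apply P_AllI; [simpl; rewrite Nat.eqb_refl; auto|]. apply Qmono.
  pose proof (A_AllE f HP HA x x a) as H. rewrite sa, fa in H. auto.
Qed.

Lemma rules_eq HP HA :
  (forall p, DP true HP HA p <-> DP false HP HA p) /\
  (forall a, DA true HP HA a <-> DA false HP HA a).
Proof.
  assert (H1 : (forall p, DP true HP HA p -> DP false HP HA p) /\
               (forall a, DA true HP HA a -> DA false HP HA a)).
  { split; [apply (DP_mut true HP HA (fun p _ => DP false HP HA p) (fun a _ => DA false HP HA a))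
           |apply (DA_mut true HP HA (fun p _ => DP false HP HA p) (fun a _ => DA false HP HA a))];
    intros; first [apply d_QAnd | apply d_QOr | apply d_QBot | apply d_QEx | apply d_QAll
                  | solve [econstructor; eauto] | solve [eapply P_MP; eauto] | solve [eapply A_MP; eauto]]. }
  assert (H2 : (forall p, DP false HP HA p -> DP true HP HA p) /\
               (forall a, DA false HP HA a -> DA true HP HA a)).
  { split; [apply (DP_mut false HP HA (fun p _ => DP true HP HA p) (fun a _ => DA true HP HA a))
           |apply (DA_mut false HP HA (fun p _ => DP true HP HA p) (fun a _ => DA true HP HA a))];
    intros; first [discriminate
                  | solve [econstructor; eauto] | solve [eapply P_MP; eauto] | solve [eapply A_MP; eauto]]. }
  destruct H1, H2; split; intros; split; auto.
Qed.

Theorem proposition2p5 :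
  ((forall a b : prob, QHCm_P (PIff (PQ (AAnd a b)) (PAnd (PQ a) (PQ b)))) /\
   (forall a b : prob, QHCm_P (PIff (PQ (AOr a b)) (POr (PQ a) (PQ b)))) /\
   QHCm_P (PImp (PQ ABot) PFalse) /\
   (forall (x : ivar) (a : prob), QHCm_P (PIff (PQ (AEx x a)) (PEx x (PQ a)))) /\
   (forall (x : ivar) (a : prob), QHCm_P (PImp (PQ (AAll x a)) (PAll x (PQ a)))) /\
   (forall (HP : prop -> Prop) (HA : prob -> Prop),
      (forall p, DP true HP HA p <-> DP false HP HA p) /\
      (forall a, DA true HP HA a <-> DA false HP HA a))) /\
  ((forall p q : prop, QHC_A (AIff (AAnd (AB p) (AB q)) (AB (PAnd p q)))) /\
   (forall p q : prop, QHC_A (AImp (AOr (AB p) (AB q)) (AB (POr p q)))) /\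
   (forall (x : ivar) (p : prop), QHC_A (AIff (AAll x (AB p)) (AB (PAll x p)))) /\
   (forall (x : ivar) (p : prop), QHC_A (AImp (AEx x (AB p)) (AB (PEx x p))))).
Proof.
  unfold QHCm_P, QHC_A.
  split; [repeat split; intros; first [apply d_QAnd | apply d_QOr | apply d_QBot | apply d_QEx | apply d_QAll | apply rules_eq; auto] |].
  repeat split; intros.
  - apply AiffI.
    + apply Auncurry, Bmono2, P_AndI.
    + apply AconjI; apply Bmono; [apply P_AndE1|apply P_AndE2].
  - apply AorE'; apply Bmono; [apply P_OrI1|apply P_OrI2].
  - destruct (subst_id x) as [sp sa]; destruct (free_for_id x) as [fp fa].
    apply AiffI.
    + eapply Atr; [apply A_BQ|apply Bmono].
      eapply Ptr; [apply P_QAll; auto|].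
      apply P_AllI; [simpl; rewrite Nat.eqb_refl; auto|].
      eapply Ptr; [|apply P_QB].
      pose proof (P_AllE true noP noA x x (PQ (AB p))) as H. simpl in H. rewrite sp, fp in H. auto.
    + apply A_AllI; [simpl; rewrite Nat.eqb_refl; auto|]. apply Bmono.
      pose proof (P_AllE true noP noA x x p) as H. rewrite sp, fp in H. auto.
  - destruct (subst_id x) as [sp sa]; destruct (free_for_id x) as [fp fa].
    apply A_ExE; [simpl; rewrite Nat.eqb_refl; auto|]. apply Bmono.
    pose proof (P_ExI true noP noA x x p) as H. rewrite sp, fp in H. auto.
Qed.
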